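(* Let $(B,\lfloor\cdot,\cdot\rfloor)$ be an SSD space with quadratic form $q$, let $P\subset B$ be $q$-positive, and suppose $\Phi_P(b)\ge q(b)$ for all $b\in B$. Then $P$ is premaximally $q$-positive and $P^{\pi}=\{b\in B:\Phi_P(b)=q(b)\}$.
   Context: An SSD space is a pair $(B,\lfloor\cdot,\cdot\rfloor)$ with $B$ a nonzero real vector space and $\lfloor\cdot,\cdot\rfloor$ a symmetric bilinear form; $q(b)=\frac12\lfloor b,b\rfloor$. A nonempty $A\subset B$ is $q$-positive if $q(b-c)\ge0$ for all $b,c\in A$; maximally $q$-positive if $q$-positive and not properly contained in another $q$-positive set. $A^{\pi}:=\{b\in B: q(b-a)\ge0\ \forall a\in A\}$. $\Phi_A(x)=\sup_{a\in A}\{\lfloor x,a\rfloor-q(a)\}$ for nonempty $A$. $P$ is premaximally $q$-positive if there is a unique maximally $q$-positive set containing $P$. *)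

(* Defs.v *)
From HB Require Import structures.
From mathcomp Require Import all_boot all_order all_algebra.
From mathcomp Require Import all_classical all_reals ereal.
Set Implicit Arguments. Unset Strict Implicit. Unset Printing Implicit Defensive.
Import Order.TTheory GRing.Theory Num.Theory.
Local Open Scope classical_set_scope.
Local Open Scope ring_scope.

Section SSD.
Variables (R : realType) (B : lmodType R) (bf : B -> B -> R).

Definition qf (b : B) : R := bf b b / 2.

Definition qpositive (A : set B) : Prop :=
  A !=set0 /\ forall b c, A b -> A c -> 0 <= qf (b - c).

Definition max_qpositive (A : set B) : Prop :=
  qpositive A /\ forall A' : set B, qpositive A' -> A `<=` A' -> A' = A.

Definition pi_set (A : set B) : set B :=
  [set b | forall a, A a -> 0 <= qf (b - a)].

Definition PhiA (A : set B) (x : B) : \bar R :=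
  ereal_sup [set ((bf x a - qf a)%:E) | a in A].

Definition premax_qpositive (P : set B) : Prop :=
  exists! M : set B, max_qpositive M /\ P `<=` M.
End SSD.

(* Main.v *)
Require Import Defs.
From HB Require Import structures.
From mathcomp Require Import all_boot all_order all_algebra.
From mathcomp Require Import all_classical all_reals ereal.
From mathcomp Require Import ring lra.
Import Order.TTheory GRing.Theory Num.Theory.
Local Open Scope classical_set_scope.
Local Open Scope ring_scope.

Lemma bfDl {R : realType} {B : lmodType R} {bf : B -> B -> R}
  (hlin : forall (a : R) (x y z : B), bf (a *: x + y) z = a * bf x z + bf y z)
  x y z : bf (x + y) z = bf x z + bf y z.
Proof. by have := hlin 1 x y z; rewrite scale1r mul1r. Qed.

Lemma bf0l {R : realType} {B : lmodType R} {bf : B -> B -> R}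
  (hlin : forall (a : R) (x y z : B), bf (a *: x + y) z = a * bf x z + bf y z)
  z : bf 0 z = 0.
Proof. have := bfDl hlin 0 0 z; rewrite addr0 => h; lra. Qed.

Lemma bfZl {R : realType} {B : lmodType R} {bf : B -> B -> R}
  (hlin : forall (a : R) (x y z : B), bf (a *: x + y) z = a * bf x z + bf y z)
  a x z : bf (a *: x) z = a * bf x z.
Proof. by have := hlin a x 0 z; rewrite addr0 bf0l // addr0. Qed.

Lemma bfBl {R : realType} {B : lmodType R} {bf : B -> B -> R}
  (hlin : forall (a : R) (x y z : B), bf (a *: x + y) z = a * bf x z + bf y z)
  x y z : bf (x - y) z = bf x z - bf y z.
Proof. by rewrite bfDl // -scaleN1r bfZl // mulN1r. Qed.

Lemma qsub {R : realType} {B : lmodType R} {bf : B -> B -> R}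
  (hsym : forall x y, bf x y = bf y x)
  (hlin : forall (a : R) (x y z : B), bf (a *: x + y) z = a * bf x z + bf y z)
  x a : qf bf (x - a) = qf bf x - bf x a + qf bf a.
Proof.
rewrite /qf !bfBl // (hsym x (x - a)) (hsym a (x - a)) !bfBl // (hsym a x).
by field.
Qed.

Theorem mainTheorem4 (R : realType) (B : lmodType R) (bf : B -> B -> R)
  (hB : exists b : B, b != 0)
  (hsym : forall x y, bf x y = bf y x)
  (hlin : forall (a : R) (x y z : B), bf (a *: x + y) z = a * bf x z + bf y z)
  (P : set B)
  (hP : qpositive bf P)
  (hPhi : forall b : B, ((qf bf b)%:E <= PhiA bf P b)%E) :
  premax_qpositive bf P /\
  pi_set bf P = [set b | PhiA bf P b = (qf bf b)%:E].
Proof.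
have keyx : forall x e, 0 < e -> exists2 a, P a & qf bf (x - a) < e.
  move=> x e e0.
  have : ((qf bf x - e)%:E < PhiA bf P x)%E.
    apply: (lt_le_trans _ (hPhi x)); rewrite lte_fin; lra.
  move=> /ereal_sup_gt [y [a Pa <-]]; rewrite lte_fin => h.
  exists a => //; rewrite qsub //; lra.
have PP : P `<=` pi_set bf P by move=> a Pa b Pb; exact: hP.2.
have piq : qpositive bf (pi_set bf P).
  split.
    case: hP.1 => a Pa; exists a; exact: PP.
  move=> b c Hb Hc.
  rewrite leNgt; apply/negP => hlt.
  have [a Pa ha] := keyx (2^-1 *: (b + c)) (- qf bf (b - c) / 8)
    ltac:(rewrite divr_gt0 //; lra).
  have h1 := Hb a Pa; have h2 := Hc a Pa.
  have hx : bf (2^-1 *: (b + c)) (2^-1 *: (b + c)) =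
      (bf b b + 2 * bf b c + bf c c) / 4.
    rewrite bfZl // bfDl // (hsym b) (hsym c) !bfZl // !bfDl // (hsym c b).
    by field.
  have hxa : bf (2^-1 *: (b + c)) a = (bf b a + bf c a) / 2.
    rewrite bfZl // bfDl //; by field.
  move: ha h1 h2 hlt; rewrite !qsub // /qf hx hxa.
  move=> *; lra.
have maxpi : max_qpositive bf (pi_set bf P).
  split; first exact: piq. move=> A' qA' sub; apply/seteqP; split => // b Ab a Pa.
  exact: qA'.2 _ _ Ab (sub _ (PP _ Pa)).
split.
  exists (pi_set bf P); split; first by split.
  move=> M [[qM maxM] PM]; apply: maxM => //.
  by move=> b Mb a Pa; apply: qM.2 => //; exact: PM.
apply/seteqP; split => b /=.
  move=> Hb; apply/eqP; rewrite eq_le hPhi andbT.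
  apply: ge_ereal_sup => _ [a Pa <-]; rewrite lee_fin.
  have := Hb a Pa; rewrite qsub //; lra.
move=> Hb a Pa.
have : ((bf b a - qf bf a)%:E <= PhiA bf P b)%E.
  by apply: ereal_sup_ubound; exists a.
rewrite Hb lee_fin qsub //; lra.
Qed.
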